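(* Suppose the undirected graph $\Gamma^u$ underlying the Hasse diagram $\Gamma$ of $\rho$ is a single cycle and $\Gamma$ has at least two vertices at which both adjacent arrows terminate. Then for every nontrivial group $G$ there exists a transitive function $u:\rho\to G$ that is not trivial. In particular, for the structural matrix algebra $$\begin{pmatrix}k&0&k&k\\0&k&k&k\\0&0&k&0\\0&0&0&k\end{pmatrix}$$ (i.e. $M(\rho,k)$ for $\rho$ on $\{1,2,3,4\}$ generated by $1\rho3,1\rho4,2\rho3,2\rho4$) and any nontrivial group $G$, there is a good $G$-grading that does not arise from a $G$-graded $\rho$-flag, i.e. for which there are no $g_1,\dots,g_4\in G$ with $\deg e_{ij}=g_ig_j^{-1}$ for all $i\rho j$.
   Context: $\rho$ is a preorder on a finite set $\{1,\dots,n\}$; $\mathcal C$ the poset of its equivalence classes ($i\sim j$ iff $i\rho j$ and $j\rho i$; $\hat i\le\hat j$ iff $i\rho j$). $\Gamma$ is the directed graph with vertex set $\mathcal C$ and an arrow from $\alpha$ to $\beta$ iff $\alpha<\beta$ with nothing strictly between; $\Gamma^u$ is $\Gamma$ with orientation forgotten. A transitive function on $\rho$ with values in $G$ is $u:\rho\to G$ with $u(i,j)u(j,r)=u(i,r)$ whenever $i\rho j$, $j\rho r$; it is trivial if there are $g_i\in G$ with $u(i,j)=g_ig_j^{-1}$ for all $i\rho j$. $M(\rho,k)$ ($k$ a field) is the algebra of $n\times n$ matrices with $(i,j)$-entry $0$ when $(i,j)\notin\rho$; a good $G$-grading on it is an algebra $G$-grading in which every matrix unit $e_{ij}$, $i\rho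 j$, is homogeneous (equivalently, given by a transitive function $u$ with $\deg e_{ij}=u(i,j)$). *)

(* Defs.v *)
From mathcomp Require Import all_boot.
Set Implicit Arguments. Unset Strict Implicit. Unset Printing Implicit Defensive.

Definition is_group (G : Type) (mul : G -> G -> G) (one : G) (inv : G -> G) : Prop :=
  (forall x y z, mul x (mul y z) = mul (mul x y) z) /\
  (forall x, mul one x = x) /\ (forall x, mul x one = x) /\
  (forall x, mul (inv x) x = one) /\ (forall x, mul x (inv x) = one).

Definition nontrivial_group (G : Type) (one : G) : Prop := exists g : G, g <> one.

Definition is_preorder (n : nat) (rho : rel 'I_n) : Prop :=
  reflexive rho /\ transitive rho.

Section Hasse.
Variables (n : nat) (rho : rel 'I_n).

Definition cls (i : 'I_n) : {set 'I_n} := [set j | rho i j && rho j i].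

(* the vertex set of Gamma: the set of equivalence classes *)
Definition classes : {set {set 'I_n}} := [set cls i | i : 'I_n].

Definition slt (i j : 'I_n) : bool := rho i j && ~~ rho j i.

Definition arrow (A B : {set 'I_n}) : bool :=
  [exists i : 'I_n, exists j : 'I_n,
     [&& A == cls i, B == cls j, slt i j & ~~ [exists k : 'I_n, slt i k && slt k j]]].

Definition adjU (A B : {set 'I_n}) : bool := arrow A B || arrow B A.

Definition sinks : {set {set 'I_n}} :=
  [set A in classes | [forall B in classes, adjU A B ==> arrow B A]].

End Hasse.

Definition is_cycle_graph (T : finType) (V : {set T}) (adj : rel T) : Prop :=
  exists m : nat, 3 <= m /\
  exists f : 'I_m -> T,
    injective f /\ (forall x, x \in V <-> exists k, x = f k) /\
    (forall k l : 'I_m, adj (f k) (f l) = (val l == (val k).+1 %% m) || (val k == (val l).+1 %% m)).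

(* transitive function u : rho -> G (values outside rho are irrelevant) *)
Definition transitive_fun (G : Type) (mul : G -> G -> G) (n : nat) (rho : rel 'I_n)
  (u : 'I_n -> 'I_n -> G) : Prop :=
  forall i j r, rho i j -> rho j r -> mul (u i j) (u j r) = u i r.

Definition trivial_fun (G : Type) (mul : G -> G -> G) (inv : G -> G) (n : nat) (rho : rel 'I_n)
  (u : 'I_n -> 'I_n -> G) : Prop :=
  exists g : 'I_n -> G, forall i j, rho i j -> u i j = mul (g i) (inv (g j)).

(* the preorder on {1,2,3,4} (here 0..3) generated by 1rho3, 1rho4, 2rho3, 2rho4 *)
Definition rho4 : rel 'I_4 := fun i j => (i == j) || ((val i < 2) && (2 <= val j)).

(* Main.v *)
Require Import Defs.
From mathcomp Require Import all_boot.
From Stdlib Require Import Classical.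
From mathcomp Require Import zify.
Set Implicit Arguments. Unset Strict Implicit. Unset Printing Implicit Defensive.

Section Gen.
Variables (n : nat) (rho : rel 'I_n).
Hypothesis rrefl : reflexive rho.
Hypothesis rtrans : transitive rho.

Lemma rtr x y z : rho x y -> rho y z -> rho x z.
Proof. exact: (@rtrans y x z). Qed.

Lemma cls_eqP i j : cls rho i = cls rho j <-> rho i j && rho j i.
Proof.
split.
- move=> e. have : j \in cls rho j by rewrite inE rrefl.
  by rewrite -e inE.
- case/andP=> hij hji. apply/setP=> k; rewrite !inE.
  apply/andP/andP => [[a b]|[a b]]; split.
  + exact: rtr hji a.
  + exact: rtr b hij.
  + exact: rtr hij a.
  + exact: rtr b hji.
Qed.

Lemma slt_le_trans a b c : slt rho a b -> rho b c -> slt rho a c.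
Proof.
case/andP=> hab hba hbc; rewrite /slt (rtr hab hbc) /=.
by apply/negP=> hca; rewrite (rtr hbc hca) in hba.
Qed.

Lemma le_slt_trans a b c : rho a b -> slt rho b c -> slt rho a c.
Proof.
move=> hab /andP[hbc hcb]; rewrite /slt (rtr hab hbc) /=.
by apply/negP=> hca; rewrite (rtr hca hab) in hcb.
Qed.

Lemma sltW a b : slt rho a b -> rho a b.
Proof. by case/andP. Qed.

Lemma slt_irr a : slt rho a a = false.
Proof. by rewrite /slt andbN. Qed.

Definition covr x z := slt rho x z && ~~ [exists k, slt rho x k && slt rho k z].

Lemma covr_exists_aux N x y : #|[set k | slt rho x k && slt rho k y]| < N ->
  slt rho x y -> exists z, covr x z && rho z y.
Proof.
elim: N y => [|N IH] y //= hN hxy.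
case: (boolP [exists k, slt rho x k && slt rho k y]) => [/existsP[k /andP[hxk hky]]|hno];
  last by exists y; rewrite /covr hxy hno rrefl.
have hp : [set k' | slt rho x k' && slt rho k' k] \proper [set k | slt rho x k && slt rho k y].
  apply/properP; split.
  - apply/subsetP=> w; rewrite !inE => /andP[h1 h2].
    by rewrite h1 (slt_le_trans h2 (sltW hky)).
  - by exists k; rewrite !inE ?hxk ?hky ?slt_irr ?andbF.
have := proper_card hp => hc.
have [z /andP[hz1 hz2]] := IH k (leq_trans hc hN) hxk.
by exists z; rewrite hz1 (rtr hz2 (sltW hky)).
Qed.

Lemma covr_exists x y : slt rho x y -> exists z, covr x z && rho z y.
Proof. exact: covr_exists_aux (ltnSn _). Qed.

Lemma rclosure (Y : pred 'I_n) :
  (forall x y, Y x -> rho x y -> rho y x -> Y y) ->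
  (forall x z, Y x -> covr x z -> Y z) ->
  forall x y, Y x -> rho x y -> Y y.
Proof.
move=> Hc Hcov.
suff H : forall N x y, #|[set w | slt rho x w && rho w y]| < N -> Y x -> rho x y -> Y y.
  by move=> x y; apply: (H _ x y (ltnSn _)).
elim=> [|N IH] x y //= hN hY hxy.
case: (boolP (rho y x)) => hyx; first exact: Hc hY hxy hyx.
have hs : slt rho x y by rewrite /slt hxy hyx.
have [z /andP[hcov hzy]] := covr_exists hs.
have hYz := Hcov _ _ hY hcov.
have hxz : slt rho x z by case/andP: hcov.
have hp : [set w | slt rho z w && rho w y] \proper [set w | slt rho x w && rho w y].
  apply/properP; split.
  - apply/subsetP=> w; rewrite !inE => /andP[h1 h2].
    by rewrite h2 (slt_le_trans hxz (sltW h1)).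
  - by exists z; rewrite !inE ?hxz ?hzy ?slt_irr.
exact: IH z y (leq_trans (proper_card hp) hN) hYz hzy.
Qed.

Lemma arrow_covr x z : covr x z -> arrow rho (cls rho x) (cls rho z).
Proof.
move=> /andP[h1 h2]; apply/existsP; exists x; apply/existsP; exists z.
by rewrite !eqxx h1 h2.
Qed.

Lemma arrowP A B : arrow rho A B ->
  exists i j, [/\ A = cls rho i, B = cls rho j & slt rho i j].
Proof. by case/existsP=> i /existsP[j /and4P[/eqP-> /eqP-> h _]]; exists i, j. Qed.

Lemma arrow_antisym A B : arrow rho A B -> arrow rho B A -> False.
Proof.
case/arrowP=> i [j [-> -> /andP[_ hji]]].
case/arrowP=> j' [i' [/cls_eqP/andP[h1 h2] /cls_eqP/andP[h3 h4] /andP[h5 _]]].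
by rewrite (rtr h1 (rtr h5 h4)) in hji.
Qed.

Lemma arrow_classes A B : arrow rho A B -> B \in classes rho.
Proof. by case/arrowP=> i [j [_ -> _]]; apply/imsetP; exists j. Qed.

Lemma sink_noout A B : A \in sinks rho -> arrow rho A B -> False.
Proof.
rewrite inE => /andP[_ /forallP H] hAB.
have := H B; rewrite (arrow_classes hAB) /adjU hAB /= => hBA.
exact: arrow_antisym hAB hBA.
Qed.

End Gen.

Section Cyc.
Variables (n : nat) (rho : rel 'I_n).
Hypothesis rrefl : reflexive rho.
Hypothesis rtrans : transitive rho.
Variables (m : nat) (F : nat -> {set 'I_n}).
Hypothesis Hm : 2 < m.
Hypothesis Finj : forall k l, k < m -> l < m -> F k = F l -> k = l.
Hypothesis Frange : forall A, A \in classes rho <-> exists2 k, k < m & A = F k.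
Hypothesis Fadj : forall k l, k < m -> l < m ->
  adjU rho (F k) (F l) = (l == k.+1 %% m) || (k == l.+1 %% m).
Hypothesis Fsink : F m.-1 \in sinks rho.

Lemma hm1 : m.-1 < m.
Proof. by rewrite prednK ?ltnSn // (ltn_trans _ Hm). Qed.

Definition pos x := find (fun k => cls rho x == F k) (iota 0 m).

Lemma pos_spec x : pos x < m /\ F (pos x) = cls rho x.
Proof.
have [k hk e] : exists2 k, k < m & cls rho x = F k by apply/Frange; apply/imsetP; exists x.
have hh : has (fun k => cls rho x == F k) (iota 0 m).
  by apply/hasP; exists k; rewrite ?mem_iota ?e //.
have hlt : pos x < m by rewrite /pos -[X in _ < X](size_iota 0 m) -has_find.
split=> //.
have := nth_find 0 hh; rewrite -/(pos x) nth_iota // add0n => /eqP <-. done.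
Qed.

Lemma pos_lt x : pos x < m. Proof. by case: (pos_spec x). Qed.
Lemma pos_F x : F (pos x) = cls rho x. Proof. by case: (pos_spec x). Qed.

Lemma pos_eq x k : k < m -> cls rho x = F k -> pos x = k.
Proof. by move=> hk e; apply: Finj; rewrite ?pos_lt ?pos_F. Qed.

Lemma same_pos_rho x y : pos x = pos y -> rho x y.
Proof.
move=> e. have : cls rho x = cls rho y by rewrite -!pos_F e.
by case/(cls_eqP rrefl rtrans)/andP.
Qed.

Lemma rep k : k < m -> exists x, pos x = k.
Proof.
move=> hk. have : F k \in classes rho by apply/Frange; exists k.
by case/imsetP=> x _ e; exists x; apply: pos_eq.
Qed.

Definition up k := arrow rho (F k) (F k.+1).
Definition down k := arrow rho (F k.+1) (F k).

Lemma arrow_pos a b : a < m -> b < m -> arrow rho (F a) (F b) ->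
  a != m.-1 /\ ((b = a.+1 /\ up a) \/ (a = b.+1 /\ down b) \/ (a = 0 /\ b = m.-1)).
Proof.
move=> ha hb h.
have hna : a != m.-1.
  by apply/negP=> /eqP ea; rewrite ea in h; apply: (sink_noout rrefl rtrans Fsink h).
split=> //.
have : adjU rho (F a) (F b) by rewrite /adjU h.
rewrite Fadj //; case/orP=> /eqP e.
- have ha1 : a.+1 < m.
    rewrite ltn_neqAle ha andbT; apply/negP=> /eqP ea.
    by move: hna; rewrite -ea eqxx.
  rewrite modn_small // in e; left; split=> //; by rewrite /up -e.
- have [lt|ge] := ltnP b.+1 m.
  + rewrite modn_small // in e; right; left; split=> //; by rewrite /down -e.
  + have eb : b.+1 = m by apply/eqP; rewrite eqn_leq hb ge.
    rewrite eb modnn in e; right; right; split=> //; by rewrite -eb.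
Qed.

Lemma up_or_down k : k.+1 < m -> up k || down k.
Proof.
move=> hk. have := Fadj (ltnW hk) hk; rewrite modn_small // eqxx /=.
by rewrite /adjU.
Qed.

Lemma pos_closed (P : pred nat) :
  (forall a b, a < m -> b < m -> P a -> arrow rho (F a) (F b) -> P b) ->
  forall x y, P (pos x) -> rho x y -> P (pos y).
Proof.
move=> HP x0 y0; have := @rclosure n rho rrefl rtrans (fun x => P (pos x)).
apply.
- move=> x y hx hxy hyx.
  have e : cls rho x = cls rho y by apply/(cls_eqP rrefl rtrans); rewrite hxy hyx.
  by rewrite /pos -e.
- move=> x z hx hc; apply: (HP (pos x)) => //; rewrite ?pos_lt // !pos_F.
  exact: arrow_covr.
Qed.

Lemma max_pos x y : pos x = m.-1 -> rho x y -> pos y = m.-1.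
Proof.
move=> hx hxy; apply/eqP.
have HP : forall a b, a < m -> b < m -> a == m.-1 -> arrow rho (F a) (F b) -> b == m.-1.
  by move=> a b ha hb /eqP ea h; have [] := arrow_pos ha hb h; rewrite ea eqxx.
apply: (pos_closed (P := fun a => a == m.-1) HP _ hxy); by rewrite hx.
Qed.

Lemma mono_up x y k : pos x <= k -> k < pos y -> pos y < m.-1 -> rho x y -> up k.
Proof.
move=> h1 h2 h3 hxy; case: (boolP (up k)) => // nu.
have hk1 : k.+1 < m by exact: leq_ltn_trans h2 (ltn_trans h3 hm1).
have hd : down k by move: (up_or_down hk1); rewrite (negbTE nu).
have HP : forall a b, a < m -> b < m -> (a <= k) || (a == m.-1) -> arrow rho (F a) (F b) -> (b <= k) || (b == m.-1); last first.
  have := pos_closed (P := fun a => (a <= k) || (a == m.-1)) HP (x := x) (y := y).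
  rewrite h1 /= => /(_ isT hxy) /orP[]; first by rewrite leqNgt h2.
  by move/eqP=> e; rewrite e ltnn in h3.
move=> a b ha hb Pa hab; have [hna [[eb hu]|[[ea hdn]|[ea eb]]]] := arrow_pos ha hb hab.
- move: Pa; rewrite (negbTE hna) orbF leq_eqVlt => /orP[/eqP ea|lt].
  + by rewrite -ea hu in nu.
  + by rewrite eb lt.
- by move: Pa; rewrite (negbTE hna) orbF ea => /ltnW ->.
- by rewrite eb eqxx orbT.
Qed.

Lemma mono_down x y k : pos y <= k -> k < pos x -> pos x < m.-1 -> rho x y -> down k.
Proof.
move=> h1 h2 h3 hxy; case: (boolP (down k)) => // nd.
have hk1 : k.+1 < m by exact: leq_ltn_trans h2 (ltn_trans h3 hm1).
have hu : up k by move: (up_or_down hk1); rewrite (negbTE nd) orbF.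
have HP : forall a b, a < m -> b < m -> k < a -> arrow rho (F a) (F b) -> k < b; last first.
  have := pos_closed (P := fun a => k < a) HP (x := x) (y := y).
  rewrite h2 => /(_ isT hxy); by rewrite ltnNge h1.
move=> a b ha hb Pa hab; have [hna [[eb hu']|[[ea hdn]|[ea eb]]]] := arrow_pos ha hb hab.
- by rewrite eb (ltn_trans Pa).
- move: Pa; rewrite ea ltnS leq_eqVlt => /orP[/eqP ek|//].
  by rewrite ek hdn in nd.
- by rewrite ea in Pa.
Qed.

Lemma arrow_rho a b x y : a < m -> b < m -> arrow rho (F a) (F b) ->
  pos x = a -> pos y = b -> rho x y.
Proof.
move=> ha hb /(arrowP) [i [j [ea eb hij]]] hx hy.
have : cls rho x = cls rho i by rewrite -pos_F hx ea.
have : cls rho y = cls rho j by rewrite -pos_F hy eb.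
move=> /(cls_eqP rrefl rtrans)/andP[_ h1] /(cls_eqP rrefl rtrans)/andP[h2 _].
apply: (rtr rtrans h2); move: (sltW hij) => hh; apply: (rtr rtrans hh h1).
Qed.

Lemma chain_up x : forall e, pos x <= e -> e < m ->
  (forall k, pos x <= k -> k < e -> up k) -> forall y, pos y = e -> rho x y.
Proof.
elim=> [|e IH] hxe hem hup y hy.
- apply: same_pos_rho; rewrite hy; apply/eqP; by rewrite -leqn0.
- case: (ltngtP (pos x) e.+1) => [hlt|hgt|heq].
  + have [y' hy'] := rep (ltnW hem).
    have h1 : rho x y' := IH hlt (ltnW hem) (fun k h1 h2 => hup k h1 (ltnW h2)) y' hy'.
    have h2 := arrow_rho (ltnW hem) hem (hup e hlt (ltnSn e)) hy' hy.
    apply: (rtr rtrans h1 h2).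
  + by rewrite ltnNge hxe in hgt.
  + by apply: same_pos_rho; rewrite heq hy.
Qed.

Lemma chain_down y : forall e, pos y <= e -> e < m ->
  (forall k, pos y <= k -> k < e -> down k) -> forall x, pos x = e -> rho x y.
Proof.
elim=> [|e IH] hye hem hdn x hx.
- apply: same_pos_rho; rewrite hx; apply/esym/eqP; by rewrite -leqn0.
- case: (ltngtP (pos y) e.+1) => [hlt|hgt|heq].
  + have [y' hy'] := rep (ltnW hem).
    have h1 : rho y' y := IH hlt (ltnW hem) (fun k h1 h2 => hdn k h1 (ltnW h2)) y' hy'.
    have h2 := arrow_rho hem (ltnW hem) (hdn e hlt (ltnSn e)) hx hy'.
    apply: (rtr rtrans h2 h1).
  + by rewrite ltnNge hye in hgt.
  + by apply: same_pos_rho; rewrite heq hx.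
Qed.

Lemma dich x s : pos x < m.-1 -> pos s = m.-1 -> rho x s ->
  (forall k, pos x <= k -> k.+1 < m.-1 -> up k) \/ (forall k, k < pos x -> down k).
Proof.
move=> hx hs hxs; apply: NNPP => /not_or_and [H1 H2].
have [k1 Hk1] := not_all_ex_not _ _ H1.
have [hk1a Hk1'] := imply_to_and _ _ Hk1.
have [hk1b nu] := imply_to_and _ _ Hk1'.
have [k0 Hk0] := not_all_ex_not _ _ H2.
have [hk0 nd] := imply_to_and _ _ Hk0.
have hd1 : down k1.
  have := up_or_down (ltn_trans hk1b hm1).
  by move/negP: nu => /negbTE ->.
have hu0 : up k0.
  have : k0.+1 < m by apply: leq_ltn_trans hk0 (ltn_trans hx hm1).
  by move/up_or_down; move/negP: nd => /negbTE ->; rewrite orbF.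
have HP : forall a b, a < m -> b < m -> (k0 < a) && (a <= k1) -> arrow rho (F a) (F b) -> (k0 < b) && (b <= k1); last first.
  have := pos_closed (P := fun a => (k0 < a) && (a <= k1)) HP (x := x) (y := s).
  rewrite hk0 hk1a hs /= => /(_ isT hxs).
  by move/andP=> [_ h]; move: (leq_ltn_trans h (ltn_trans (ltnSn k1) hk1b)); rewrite ltnn.
move=> a b ha hb /andP[Pa1 Pa2] hab; have [hna [[eb hu']|[[ea hdn]|[ea eb]]]] := arrow_pos ha hb hab.
- rewrite eb (ltn_trans Pa1 (ltnSn a)) /=.
  move: Pa2; rewrite leq_eqVlt => /orP[/eqP ek|//].
  by rewrite -ek hu' in nu.
- rewrite ea in Pa1 Pa2; rewrite (ltnW Pa2) andbT.
  move: Pa1; rewrite ltnS leq_eqVlt => /orP[/eqP ek|//].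
  by rewrite ek hdn in nd.
- by rewrite ea in Pa1.
Qed.

Lemma to_sink a : a < m -> (a.+1 = m.-1 \/ a = 0) -> arrow rho (F a) (F m.-1).
Proof.
move=> ha hcase.
move: Fsink; rewrite inE => /andP[_ /forallP /(_ (F a))].
have -> : F a \in classes rho by apply/Frange; exists a.
rewrite Fadj // prednK ?(ltn_trans _ Hm) // modnn /=.
case: hcase => [e|->]; last by rewrite eqxx.
by rewrite -e modn_small ?eqxx ?orbT // e hm1.
Qed.

Variable S1 : {set 'I_n}.
Hypothesis S1sink : S1 \in sinks rho.
Hypothesis S1ne : S1 != F m.-1.

Lemma onesink c : c < m.-1 -> (forall k, k < c -> down k) ->
  (forall k, c <= k -> k.+1 < m.-1 -> up k) -> False.
Proof.
move=> hc hdn hup.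
have : S1 \in classes rho by move: S1sink; rewrite inE => /andP[].
case/Frange=> t ht et.
have htn : t != m.-1 by apply/negP=> /eqP e; move: S1ne; rewrite et e eqxx.
have htm : t < m.-1 by rewrite ltn_neqAle htn /= -ltnS prednK // (ltn_trans _ Hm).
suff [Z hZ] : exists Z, arrow rho (F t) Z by apply: (sink_noout rrefl rtrans S1sink); rewrite et; exact: hZ.
case: (ltngtP t.+1 m.-1) => [lt|gt|eq].
- case: t ht et htn htm lt => [|t] ht et htn htm lt.
  + by exists (F m.-1); apply: to_sink => //; right.
  + case: (leqP t.+1 c) => hle.
    * by exists (F t); apply: hdn.
    * by exists (F t.+2); apply: hup => //; apply: ltnW.
- by rewrite ltnNge htm in gt.
- by exists (F m.-1); apply: to_sink => //; left.
Qed.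

Lemma cyc_main (G : Type) (mul : G -> G -> G) (one : G) (inv : G -> G) :
  is_group mul one inv -> nontrivial_group one ->
  exists u : 'I_n -> 'I_n -> G, transitive_fun mul rho u /\ ~ trivial_fun mul inv rho u.
Proof.
move=> [mA [m1l [m1r [mVl mVr]]]] [g hg].
have hm2 : m.-2 < m.-1 by move: Hm; clear; lia.
have [b hb] := rep (ltn_trans hm2 hm1).
have [s hs] := rep hm1.
have h0m : 0 < m by move: Hm; clear; lia.
have [x0 hx0] := rep h0m.
have hm20 : m.-1 != 0 by move: Hm; clear; lia.
have notmax : forall x, pos x != m.-1 -> pos x < m.-1.
  by move=> x hx; have := pos_lt x; move: hx; clear; lia.
exists (fun i j => if (pos j == m.-1) && rho i b then g else one); split.
- move=> i j r hij hjr.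
  case: (boolP (pos r == m.-1)) => hr; last first.
    have hj : (pos j == m.-1) = false.
      by apply/negbTE/negP=> /eqP e; rewrite (max_pos e hjr) eqxx in hr.
    by rewrite hj /= m1l.
  case: (boolP (pos j == m.-1)) => hj.
    have -> : rho j b = false.
      apply/negP=> hjb; have := max_pos (eqP hj) hjb; rewrite hb => e.
      by rewrite e ltnn in hm2.
    by rewrite /= m1r.
  rewrite /= m1l.
  have hjlt := notmax _ hj.
  case: (boolP (rho j b)) => hjb; first by rewrite (rtr rtrans hij hjb).
  case: (boolP (rho i b)) => hib //.
  have hilt : pos i < m.-1.
    apply: notmax; apply/negP=> /eqP e; have := max_pos e hij; move/eqP; by rewrite (negbTE hj).
  have upi : forall k, pos i <= k -> k.+1 < m.-1 -> up k.
    by move=> k h1 h2; apply: (mono_up h1 _ _ hib); rewrite hb; lia.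
  exfalso; move/negP: hjb; apply.
  have hm2' : m.-2 < m by lia.
  case: (leqP (pos i) (pos j)) => hij'.
  + apply: (chain_up (e := m.-2)) => //; first by lia.
    move=> k h1 h2; apply: upi; lia.
  + have dn : forall k, pos j <= k -> k < pos i -> down k.
      by move=> k h1 h2; apply: (mono_down h1 h2 hilt hij).
    case: (dich hjlt (eqP hr) hjr) => [hu|hd].
    * apply: (chain_up (e := m.-2)) => //; first by lia.
      move=> k h1 h2; apply: hu; lia.
    * exfalso; apply: (onesink hilt) => //.
      move=> k hk; case: (ltnP k (pos j)) => h; [exact: hd | apply: dn => //].
- case=> h hh.
  have geq : forall a c, one = mul a (inv c) -> a = c.
    move=> a c e; rewrite -[a]m1r -(mVl c) mA -e m1l //.
  have claim : forall k, k < m.-1 -> forall x, pos x = k -> h x = h x0.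
    elim=> [|k IH] hk x hx.
    + apply: geq; rewrite -hh; last by apply: same_pos_rho; rewrite hx hx0.
      by rewrite hx0 eq_sym (negbTE hm20).
    + have hk0 : k < m by lia.
      have hk1 : k.+1 < m by lia.
      have [y hy] := rep hk0.
      rewrite -(IH (ltnW hk) y hy).
      case/orP: (up_or_down hk1) => [hu|hd].
      * have hyx : rho y x by apply: (arrow_rho hk0 hk1 hu hy hx).
        symmetry; apply: geq; rewrite -(hh _ _ hyx) hx.
        by have -> : (k.+1 == m.-1) = false by lia.
      * have hxy : rho x y by apply: (arrow_rho hk1 hk0 hd hx hy).
        apply: geq; rewrite -(hh _ _ hxy) hy.
        by have -> : (k == m.-1) = false by lia.
  have hm2' : m.-2 < m by lia.
  have hx0s : rho x0 s.
    apply: (arrow_rho (a := 0) (b := m.-1)) => //; first exact: hm1.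
    by apply: to_sink => //; right.
  have hbs : rho b s.
    apply: (arrow_rho (a := m.-2) (b := m.-1)) => //; first exact: hm1.
    apply: to_sink => //; left; lia.
  have nx0b : rho x0 b = false.
    apply/negP=> hx0b; apply: (onesink (c := 0)) => //; first by lia.
    move=> k hk0 hk; apply: (mono_up _ _ _ hx0b); rewrite ?hx0 ?hb //; lia.
  have e1 : h x0 = h s.
    apply: geq; rewrite -(hh _ _ hx0s) hs eqxx nx0b //.
  have := hh b s hbs; rewrite hs eqxx rrefl /= (claim _ hm2 b hb) e1 mVr.
  by move=> e; apply: hg.
Qed.

End Cyc.

Lemma cycle_rot (T : finType) (V : {set T}) (adj : rel T) s :
  is_cycle_graph V adj -> s \in V ->
  exists m (F : nat -> T), [/\ 2 < m,
    (forall k l, k < m -> l < m -> F k = F l -> k = l),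
    (forall x, x \in V <-> exists2 k, k < m & x = F k),
    (forall k l, k < m -> l < m -> adj (F k) (F l) = (l == k.+1 %% m) || (k == l.+1 %% m)) &
    F m.-1 = s].
Proof.
case=> m [hm [f [finj [frange fadj]]]] hs.
have [k0 ek0] := (proj1 (frange s)) hs.
case: m hm f finj frange fadj k0 ek0 => [//|m'] hm f finj frange fadj k0 ek0.
set t := k0.+1.
have ht : t <= m'.+1 by rewrite /t ltn_ord.
pose F k := f (inord ((k + t) %% m'.+1)).
have vF : forall k, nat_of_ord (inord ((k + t) %% m'.+1) : 'I_m'.+1) = (k + t) %% m'.+1.
  by move=> k; rewrite inordK // ltn_pmod.
exists m'.+1, F; split => //.
- move=> k l hk hl /finj /(congr1 val); rewrite /= !vF => /eqP.
  by rewrite eqn_modDr !modn_small // => /eqP.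
- move=> x; split.
  + case/frange=> k' ->.
    exists ((k' + (m'.+1 - t)) %% m'.+1); first by rewrite ltn_pmod.
    rewrite /F; congr f; apply: val_inj; rewrite /= vF.
    by rewrite modnDml -addnA subnK // modnDr modn_small.
  + by case=> k hk ->; apply/frange; exists (inord ((k + t) %% m'.+1)).
- have hlp : forall a b, a < m'.+1 ->
      ((a + t) %% m'.+1 == ((b + t) %% m'.+1).+1 %% m'.+1) = (a == b.+1 %% m'.+1).
    move=> a b ha; rewrite -[((b + t) %% m'.+1).+1]addn1 modnDml addn1 -addSn.
    by rewrite eqn_modDr (modn_small ha).
  move=> k l hk hl; rewrite /F fadj /= !vF !hlp //.
- rewrite /F ek0; congr f; apply: val_inj; rewrite /= vF /t addnS -addSn addnC modnDr.
  by rewrite modn_small.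
Qed.

Theorem mainTheorem14 :
  (forall (n : nat) (rho : rel 'I_n),
     is_preorder rho ->
     is_cycle_graph (classes rho) (adjU rho) ->
     2 <= #|sinks rho| ->
     forall (G : Type) (mul : G -> G -> G) (one : G) (inv : G -> G),
       is_group mul one inv -> nontrivial_group one ->
       exists u : 'I_n -> 'I_n -> G,
         transitive_fun mul rho u /\ ~ trivial_fun mul inv rho u)
  /\
  (forall (G : Type) (mul : G -> G -> G) (one : G) (inv : G -> G),
     is_group mul one inv -> nontrivial_group one ->
     exists u : 'I_4 -> 'I_4 -> G,
       transitive_fun mul rho4 u /\ ~ trivial_fun mul inv rho4 u).
Proof.
split.
- move=> n rho [rr rt] hcyc hsinks G mul one inv hG hnt.
  case/card_gt1P: hsinks => S0 [S1 [h0 h1 hne]].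
  have hS0c : S0 \in classes rho by move: h0; rewrite inE => /andP[].
  have [m [F [Hm Finj Frange Fadj FS0]]] := cycle_rot hcyc hS0c.
  have Fs : F m.-1 \in sinks rho by rewrite FS0.
  have S1ne : S1 != F m.-1 by rewrite FS0 eq_sym.
  exact: (cyc_main rr rt Hm Finj Frange Fadj Fs h1 S1ne hG hnt).
- move=> G mul one inv [mA [m1l [m1r [mVl mVr]]]] [g hg].
  have uii : forall i : 'I_4, (val i == 0) && (val i == 2) = false.
    by move=> i; case: eqP => // ->.
  exists (fun i j : 'I_4 => if (val i == 0) && (val j == 2) then g else one); split.
  + move=> i j r; rewrite /rho4; case/orP => [/eqP <-|/andP[hi hj]].
      by rewrite uii m1l.
    case/orP => [/eqP <-|/andP[hj' _]]; first by rewrite uii m1r.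
    by exfalso; lia.
  + case=> h hh.
    have geq : forall a c, one = mul a (inv c) -> a = c.
      move=> a c e; rewrite -[a]m1r -(mVl c) mA -e m1l //.
    pose i0 : 'I_4 := @Ordinal 4 0 isT.
    pose i1 : 'I_4 := @Ordinal 4 1 isT.
    pose i2 : 'I_4 := @Ordinal 4 2 isT.
    pose i3 : 'I_4 := @Ordinal 4 3 isT.
    have e02 := hh i0 i2 isT. have e03 := hh i0 i3 isT.
    have e12 := hh i1 i2 isT. have e13 := hh i1 i3 isT.
    rewrite /= in e02 e03 e12 e13.
    have a03 := geq _ _ e03. have a12 := geq _ _ e12. have a13 := geq _ _ e13.
    apply: hg; rewrite e02 a03 -a13 a12 mVr //.
Qed.
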